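(* Let $M,N,P$ be regular languages over $\Sigma$ with state complexities $m,n,p\geq 3$ respectively. Then $$\mathrm{sc}(M\cdot(N\oplus P))\leq (m-1)\alpha_{n,p}+\alpha'_{n,p}.$$
   Context: $\mathrm{sc}(L)$ is the number of states of the minimal complete DFA of $L$; $\oplus$ is symmetric difference and $\cdot$ is concatenation. An $n\times p$ tableau is a subset $S$ of an $n\times p$ grid of cells; it is saturated if whenever cells $(x,x'),(x,y'),(y,y')$ are in $S$ then $(y,x')\in S$. $\alpha_{n,p}$ denotes the number of saturated $n\times p$ tableaux, and $\alpha'_{n,p}$ the number of saturated $n\times p$ tableaux containing a fixed given cell (this number does not depend on the cell). *)

(* Defs.v *)
From mathcomp Require Import all_boot.
Set Implicit Arguments. Unset Strict Implicit. Unset Printing Implicit Defensive.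

Definition lang (A : finType) := seq A -> bool.

Record dfa (A : finType) (k : nat) := Dfa {
  dfa_start : 'I_k;
  dfa_delta : 'I_k -> A -> 'I_k;
  dfa_final : pred 'I_k }.

Definition dfa_accepts (A : finType) k (D : dfa A k) (w : seq A) : bool :=
  dfa_final D (foldl (dfa_delta D) (dfa_start D) w).

Definition recognizes (A : finType) k (D : dfa A k) (L : lang A) : Prop :=
  forall w, dfa_accepts D w = L w.

Definition sc_le (A : finType) (L : lang A) (k : nat) : Prop :=
  exists k', k' <= k /\ exists D : dfa A k', recognizes D L.

Definition sc_eq (A : finType) (L : lang A) (k : nat) : Prop :=
  (exists D : dfa A k, recognizes D L) /\
  (forall k', k' < k -> forall D : dfa A k', ~ recognizes D L).

Definition lsymdiff (A : finType) (L1 L2 : lang A) : lang A :=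
  fun w => L1 w (+) L2 w.

Definition lconcat (A : finType) (L1 L2 : lang A) : lang A :=
  fun w => [exists i : 'I_(size w).+1, L1 (take i w) && L2 (drop i w)].

(* Tableaux: subsets of the n x p grid; cell (x, x') with row x, column x'. *)
Definition saturated n p (S : {set 'I_n * 'I_p}) : bool :=
  [forall x : 'I_n, forall y : 'I_n, forall x' : 'I_p, forall y' : 'I_p,
     [&& (x, x') \in S, (x, y') \in S & (y, y') \in S] ==> ((y, x') \in S)].

Definition alpha n p : nat :=
  #|[set S : {set 'I_n * 'I_p} | saturated S]|.

(* Number of saturated tableaux containing the fixed cell (0,0)
   (the count is independent of the chosen cell). *)
Definition contains_cell00 n p (S : {set 'I_n * 'I_p}) : bool :=
  [exists c in S, (nat_of_ord c.1 == 0) && (nat_of_ord c.2 == 0)].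

Definition alpha' n p : nat :=
  #|[set S : {set 'I_n * 'I_p} | saturated S && contains_cell00 S]|.

(* Main.v *)
Require Import Defs.
From mathcomp Require Import all_boot perm.
From mathcomp Require Import boolp.
Set Implicit Arguments. Unset Strict Implicit. Unset Printing Implicit Defensive.

Lemma sc_le_fin (A : finType) (L : lang A) (T : finType) (s : T) (d : T -> A -> T)
   (f : pred T) k :
  (forall w, f (foldl d s w) = L w) -> #|T| <= k -> sc_le L k.
Proof.
move=> H Hk; exists #|T|; split => //.
exists (Dfa (enum_rank s) (fun i a => enum_rank (d (enum_val i) a)) (fun i => f (enum_val i))).
move=> w; rewrite /dfa_accepts /= -H.
suff -> : forall t, foldl (fun i a => enum_rank (d (enum_val i) a)) (enum_rank t) w
   = enum_rank (foldl d t w) by rewrite enum_rankK.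
by elim: w => [|a w IH] t //=; rewrite enum_rankK IH.
Qed.

Lemma sc_le_sub (A : finType) (L : lang A) (R : finType) (P : pred R) (s : R)
  (d : R -> A -> R) (f : pred R) k :
  P s -> (forall x a, P x -> P (d x a)) ->
  (forall w, f (foldl d s w) = L w) -> #|P| <= k -> sc_le L k.
Proof.
move=> Ps Pd H Hk.
pose T := {x : R | P x}.
pose sT : T := exist _ s Ps.
pose dT (t : T) a : T := exist _ (d (val t) a) (Pd _ a (valP t)).
apply: (@sc_le_fin A L T sT dT (fun t => f (val t))).
  move=> w; rewrite -H.
  suff -> : forall t, val (foldl dT t w) = foldl d (val t) w by [].
  by elim: w => [|a w IH] t //=; rewrite IH.
by rewrite card_sig.
Qed.

Lemma relabel (A : finType) k (D : dfa A k) (i : 'I_k) :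
  exists D' : dfa A k, dfa_start D' = i /\ forall w, dfa_accepts D' w = dfa_accepts D w.
Proof.
pose s := tperm (dfa_start D) i.
exists (Dfa i (fun x a => s (dfa_delta D (s x) a)) (fun x => dfa_final D (s x))); split => // w.
rewrite /dfa_accepts /=.
suff -> : forall x, s (foldl (fun x a => s (dfa_delta D (s x) a)) x w)
   = foldl (dfa_delta D) (s x) w by rewrite tpermR.
by elim: w => [|a w IH] x /=; rewrite ?IH ?tpermK.
Qed.

Lemma has_iota_exists k (f : pred nat) : has f (iota 0 k) = [exists i : 'I_k, f i].
Proof.
apply/hasP/existsP => [[x]|[i fi]].
  rewrite mem_iota add0n => /andP[_ xk] fx; by exists (Ordinal xk).
by exists (val i) => //; rewrite mem_iota add0n ltn_ord.
Qed.

Section Main.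
Variables (A : finType) (n p : nat).
Local Notation Q := ('I_n * 'I_p)%type.
Variables (dN : 'I_n -> A -> 'I_n) (dP : 'I_p -> A -> 'I_p) (fN : pred 'I_n) (fP : pred 'I_p).
Definition d2 (c : Q) a : Q := (dN c.1 a, dP c.2 a).
Definition acc2 (c : Q) : bool := fN c.1 (+) fP c.2.
Definition run2 c w := foldl d2 c w.
Lemma run2_1 c w : run2 c w = (foldl dN c.1 w, foldl dP c.2 w).
Proof. by elim: w c => [|a w IH] [x y] //=; rewrite /run2 /= -/(run2 _ _) IH. Qed.

Definition lang_of (S : {set Q}) (u : seq A) : bool := [exists c in S, acc2 (run2 c u)].
Definition cl (S : {set Q}) : {set Q} :=
  [set c | [forall T : {set Q}, (saturated T && (S \subset T)) ==> (c \in T)]].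

Lemma cl_sub (S : {set Q}) : S \subset cl S.
Proof.
apply/subsetP => c cS; rewrite inE; apply/forallP => T; apply/implyP => /andP[_ /subsetP]; exact.
Qed.

Lemma cl_sat (S : {set Q}) : saturated (cl S).
Proof.
apply/forallP => x; apply/forallP => y; apply/forallP => x'; apply/forallP => y'.
apply/implyP; rewrite !inE => /and3P[/forallP h1 /forallP h2 /forallP h3].
apply/forallP => T; apply/implyP => HT; move: (h1 T) (h2 T) (h3 T); rewrite HT /=.
case/andP: HT => /forallP sT _ H1 H2 H3.
move: (sT x) => /forallP/(_ y)/forallP/(_ x')/forallP/(_ y')/implyP; apply.
by rewrite H1 H2 H3.
Qed.

Lemma cl_lang (S : {set Q}) u : lang_of (cl S) u = lang_of S u.
Proof.
apply/idP/idP; last first.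
  by case/existsP => c /andP[cS h]; apply/existsP; exists c; rewrite (subsetP (cl_sub S)).
pose T0 := [set c | `[< forall u, acc2 (run2 c u) -> lang_of S u >]].
have satT0 : saturated T0.
  apply/forallP => x; apply/forallP => y; apply/forallP => x'; apply/forallP => y'.
  apply/implyP; rewrite !inE => /and3P[/asboolP h1 /asboolP h2 /asboolP h3].
  apply/asboolP => v; move: (h1 v) (h2 v) (h3 v); rewrite /acc2 !run2_1 /=.
  by case: (fN (foldl dN x v)); case: (fN (foldl dN y v));
     case: (fP (foldl dP x' v)); case: (fP (foldl dP y' v)) => //= H1 H2 H3 _;
     by [apply: H1 | apply: H2 | apply: H3].
have ST0 : S \subset T0.
  apply/subsetP => c cS; rewrite inE; apply/asboolP => v h.
  by apply/existsP; exists c; rewrite cS.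
case/existsP => c /andP[cc h].
have : c \in T0.
  by move: cc; rewrite inE => /forallP/(_ T0); rewrite satT0 ST0.
by rewrite inE => /asboolP; apply.
Qed.

Lemma lang_ofU (S1 S2 : {set Q}) u : lang_of (S1 :|: S2) u = lang_of S1 u || lang_of S2 u.
Proof.
apply/existsP/orP => [[c /andP[]]|].
  by rewrite inE => /orP[] c1 h; [left|right]; apply/existsP; exists c; rewrite c1.
by case=> /existsP[c /andP[c1 h]]; exists c; rewrite inE c1 ?orbT.
Qed.

Lemma lang_of_im (S : {set Q}) a u : lang_of ((fun c => d2 c a) @: S) u = lang_of S (a :: u).
Proof.
apply/existsP/existsP => [[c /andP[/imsetP[c' c'S ->] h]]|[c /andP[cS h]]].
  by exists c'; rewrite c'S.
by exists (d2 c a); rewrite (imset_f (fun c => d2 c a) cS).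
Qed.

Lemma lang_of1 (c : Q) u : lang_of [set c] u = acc2 (run2 c u).
Proof.
apply/existsP/idP => [[c' /andP[]]|h]; first by rewrite inE => /eqP ->.
by exists c; rewrite inE eqxx.
Qed.

Lemma lang_of0 u : lang_of set0 u = false.
Proof. by apply/existsP => [[c /andP[]]]; rewrite inE. Qed.

Variables (m : nat) (dM : 'I_m -> A -> 'I_m) (fM : pred 'I_m) (sM : 'I_m) (s2 : Q).
Definition extra q : {set Q} := if fM q then [set s2] else set0.
Definition rstart : 'I_m * {set Q} := (sM, cl (extra sM)).
Definition rdelta (x : 'I_m * {set Q}) a : 'I_m * {set Q} :=
  (dM x.1 a, cl ((fun c => d2 c a) @: x.2 :|: extra (dM x.1 a))).
Definition racc (x : 'I_m * {set Q}) := lang_of x.2 [::].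

Lemma lang_extra q u : lang_of (extra q) u = fM q && acc2 (run2 s2 u).
Proof. by rewrite /extra; case: (fM q); rewrite ?lang_of1 ?lang_of0. Qed.

Lemma rinv w : (foldl rdelta rstart w).1 = foldl dM sM w /\
  forall u, lang_of (foldl rdelta rstart w).2 u =
   has (fun i => fM (foldl dM sM (take i w)) && acc2 (run2 s2 (drop i w ++ u)))
       (iota 0 (size w).+1).
Proof.
elim/last_ind: w => [|w a [IH1 IH2]].
  by split => // u; rewrite /= cl_lang lang_extra orbF.
rewrite !foldl_rcons; split; first by rewrite /= IH1.
move=> u; rewrite [LHS]/= cl_lang lang_ofU lang_of_im IH2 lang_extra IH1.
rewrite size_rcons.
have -> : iota 0 (size w).+2 = iota 0 (size w).+1 ++ [:: (size w).+1].
  by rewrite -[in LHS]addn1 iotaD.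
rewrite has_cat.
rewrite has_seq1.
have -> : take (size w).+1 (rcons w a) = rcons w a by rewrite -(size_rcons w a) take_size.
have -> : drop (size w).+1 (rcons w a) = [::] by rewrite -(size_rcons w a) drop_size.
rewrite foldl_rcons cat0s; congr (_ || _).
apply: eq_in_has => i; rewrite mem_iota add0n ltnS => iw.
rewrite -cats1 takel_cat // drop_cat; case: ltngtP iw => // [_ _|-> _].
  by rewrite -catA.
by rewrite subnn drop0 drop_size.
Qed.
End Main.

Lemma count_states n p m (q0 : 'I_m) (s2 : 'I_n * 'I_p) :
  nat_of_ord s2.1 = 0 -> nat_of_ord s2.2 = 0 ->
  #|[pred x : 'I_m * {set 'I_n * 'I_p} | saturated x.2 && ((x.1 == q0) ==> (s2 \in x.2))]|
   <= (m - 1) * alpha n p + alpha' n p.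
Proof.
move=> h1 h2.
have cc S : contains_cell00 S = (s2 \in S).
  apply/existsP/idP => [[c /andP[cS /andP[/eqP e1 /eqP e2]]]|sS]; last first.
    by exists s2; rewrite sS h1 h2.
  suff -> : s2 = c by [].
  case: s2 h1 h2 => x y /= h1 h2; case: c {cS} e1 e2 => x' y' /= e1 e2.
  by congr pair; apply: val_inj; rewrite /= ?h1 ?h2 ?e1 ?e2.
set B := [set S : {set 'I_n * 'I_p} | saturated S].
set B' := [set S : {set 'I_n * 'I_p} | saturated S && contains_cell00 S].
apply: (@leq_trans #|setX [set q0] B' :|: setX [set~ q0] B|).
  apply: subset_leq_card; apply/subsetP => [[q S]]; rewrite !inE /= cc.
  by case: (q == q0); case: (saturated S) => //= ->.
rewrite cardsU; apply: leq_trans (leq_subr _ _) _.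
rewrite !cardsX cards1 cardsC1 card_ord mul1n addnC subn1 leqnn //.
Qed.

Theorem theorem1 (A : finType) (M N P : lang A) (m n p : nat) :
  3 <= m -> 3 <= n -> 3 <= p ->
  sc_eq M m -> sc_eq N n -> sc_eq P p ->
  sc_le (lconcat M (lsymdiff N P)) ((m - 1) * alpha n p + alpha' n p).
Proof.
move=> hm hn hp [[DM rM] _] [[DN0 rN0] _] [[DP0 rP0] _].
have n0 : 0 < n by apply: leq_trans hn.
have p0 : 0 < p by apply: leq_trans hp.
have [DN [sN rN]] := relabel DN0 (Ordinal n0).
have [DP [sP rP]] := relabel DP0 (Ordinal p0).
pose s2 := (dfa_start DN, dfa_start DP).
case: (pickP (dfa_final DM)) => [q0 fq0|nofin]; last first.
  apply: (@sc_le_fin A _ unit tt (fun _ _ => tt) pred0).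
    move=> w; apply/esym/existsP => [[i /andP[]]].
    by rewrite -rM /dfa_accepts nofin.
  rewrite card_unit; apply: leq_trans (leq_addl _ _).
  apply/card_gt0P; exists setT; rewrite inE; apply/andP; split.
    by apply/forallP=> x; apply/forallP=> y; apply/forallP=> x'; apply/forallP=> y';
       rewrite !inE.
  by apply/existsP; exists s2; rewrite inE /= sN sP.
pose Pr := [pred x : 'I_m * {set 'I_n * 'I_p} |
   saturated x.2 && ((x.1 == q0) ==> (s2 \in x.2))].
apply: (@sc_le_sub A _ _ Pr
  (rstart (dfa_final DM) (dfa_start DM) s2)
  (rdelta (dfa_delta DN) (dfa_delta DP) (dfa_delta DM) (dfa_final DM) s2)
  (racc (dfa_delta DN) (dfa_delta DP) (dfa_final DN) (dfa_final DP) (m:=m))).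
- rewrite inE /= cl_sat /=; apply/implyP => /eqP e.
  by rewrite (subsetP (cl_sub _)) // /extra e fq0 inE.
- move=> [q S] a _; rewrite inE /= cl_sat /=; apply/implyP => /eqP e.
  by rewrite (subsetP (cl_sub _)) // /extra e fq0 inE set11 orbT.
- move=> w; have [_ H] := rinv (dfa_delta DN) (dfa_delta DP) (dfa_final DN) (dfa_final DP)
     (m:=m) (dfa_delta DM) (dfa_final DM) (dfa_start DM) s2 w.
  rewrite /racc H has_iota_exists /lconcat; apply: eq_existsb => i.
  rewrite cats0 run2_1 /acc2 /lsymdiff -rM -rN0 -rP0 -rN -rP.
  by [].
- by apply: count_states; rewrite /= ?sN ?sP.
Qed.
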